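(* Let $W$ be a recurrent infinite word and let $S$ be a graph with words satisfying properties (1)–(6) of a Rauzy scheme for $W$. Then for every factor $u$ of $W$ there is an admissible path $s$ in $S$ such that $u\sqsubseteq F(s)$.
   Context: An infinite word $W$ is recurrent if every factor of $W$ occurs in $W$ infinitely many times. For finite words, $u\sqsubseteq w$ means $u$ is a factor of $w$, and $u\sqsubseteq_k w$ means $u$ occurs in $w$ at least $k$ times. A graph with words is a strongly connected finite directed graph (multiple edges and loops allowed) in which every edge $e$ carries two finite words, a front word $F(e)$ and a back word $B(e)$, and every vertex either has in-degree $1$ and out-degree $>1$ (distributing vertex) or in-degree $>1$ and out-degree $1$ (collecting vertex). A path is a finite nonempty sequence of edges $v_1\dots v_n$ with each $v_{i+1}$ starting where $v_i$ ends; its edge record is the word $v_1\dots v_n$ over the alphabet of edges, and subpaths, prefixes, suffixes and $s_1\sqsubseteq_k s_2$ for paths are defined via edge records. A path is symmetric if its first edge starts at a collecting vertex and its last edge ends at a distributing vertex. For $s=v_1\dots v_n$, $F(s)$ is the concatenation, in order, of the front words of $v_1$ and of all $v_i$ ($i\ge2$) starting at a distributing vertex; $B(s)$ is the concatenation, in order, of the back words of all $v_i$ ($i\le n-1$) ending at a collecting vertex and of $v_n$. The properties of a Rauzy scheme for $W$ are: (1) the graph has more than one edge; (2) front words of edges leaving a common distributing vertex have pairwise distinct first letters, and back words of edges entering a common collecting vertex have pairwise distinct last letters; (3) $F(s)=B(s)$ for every symmetric path $s$; (4) for symmetric paths $s_1,s_2$ and $k\ge1$, $F(s_1)\sqsubseteq_k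 F(s_2)$ implies $s_1\sqsubseteq_k s_2$; (5) all words on edges are factors of $W$; (6) every factor of $W$ is a factor of $F(s)$ for some symmetric path $s$; (7) for every edge $e$ there is a factor $u_e$ of $W$ such that every symmetric path $s$ with $u_e\sqsubseteq F(s)$ passes through $e$. A graph with words satisfying all of (1)–(7) is a Rauzy scheme for $W$. A symmetric path $s$ is admissible if $F(s)\sqsubseteq W$. *)

(* Defs.v *)
From mathcomp Require Import ssreflect ssrfun ssrbool eqtype ssrnat seq path choice fintype fingraph.
Set Implicit Arguments. Unset Strict Implicit. Unset Printing Implicit Defensive.

Section Words.
Variable A : eqType.

Definition window (W : nat -> A) (i n : nat) : seq A := mkseq (fun j => W (i + j)) n.

Definition ifactor (W : nat -> A) (u : seq A) : Prop := exists i, window W i (size u) = u.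

Definition recurrent (W : nat -> A) : Prop :=
  forall u, ifactor W u -> forall N, exists i, N <= i /\ window W i (size u) = u.

Definition occ (T : eqType) (u w : seq T) : nat :=
  count (fun i => take (size u) (drop i w) == u) (iota 0 (size w - size u).+1).

Definition occk (T : eqType) (k : nat) (u w : seq T) : bool := k <= occ u w.
End Words.

Section Graph.
Variables (A : eqType) (V E : finType) (src tgt : E -> V) (Fw Bw : E -> seq A).

Definition indeg (v : V) : nat := #|[pred e | tgt e == v]|.
Definition outdeg (v : V) : nat := #|[pred e | src e == v]|.
Definition distributing (v : V) : bool := (indeg v == 1) && (1 < outdeg v).
Definition collecting (v : V) : bool := (1 < indeg v) && (outdeg v == 1).

Definition adj : rel V := fun x y => [exists e, (src e == x) && (tgt e == y)].
Definition strongly_connected : Prop := forall x y, connect adj x y.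

(* graph with words (the words are the maps Fw, Bw) *)
Definition graph_with_words : Prop :=
  strongly_connected /\ forall v, distributing v || collecting v.

Definition is_path (s : seq E) : bool :=
  (s != [::]) && sorted (fun e1 e2 => tgt e1 == src e2) s.

Definition symmetric (s : seq E) : bool :=
  if s is e :: s' then
    [&& is_path s, collecting (src e) & distributing (tgt (last e s'))]
  else false.

Definition Fp (s : seq E) : seq A :=
  if s is e :: s' then
    Fw e ++ flatten [seq Fw x | x <- s' & distributing (src x)]
  else [::].

Definition Bp (s : seq E) : seq A :=
  if s is e :: s' then
    flatten [seq Bw x | x <- belast e s' & collecting (tgt x)] ++ Bw (last e s')
  else [::].

Definition rs_prop1 : Prop := 1 < #|E|.
Definition rs_prop2 : Prop :=
  (forall e1 e2, e1 != e2 -> src e1 = src e2 -> distributing (src e1) ->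
     exists a1 w1 a2 w2, (Fw e1 = a1 :: w1 /\ Fw e2 = a2 :: w2 /\ a1 != a2)) /\
  (forall e1 e2, e1 != e2 -> tgt e1 = tgt e2 -> collecting (tgt e1) ->
     exists w1 a1 w2 a2, (Bw e1 = rcons w1 a1 /\ Bw e2 = rcons w2 a2 /\ a1 != a2)).
Definition rs_prop3 : Prop := forall s, symmetric s -> Fp s = Bp s.
Definition rs_prop4 : Prop :=
  forall s1 s2 k, symmetric s1 -> symmetric s2 -> 1 <= k ->
    occk k (Fp s1) (Fp s2) -> occk k s1 s2.
Definition rs_prop5 (W : nat -> A) : Prop :=
  forall e, ifactor W (Fw e) /\ ifactor W (Bw e).
Definition rs_prop6 (W : nat -> A) : Prop :=
  forall u, ifactor W u -> exists s, symmetric s /\ infix u (Fp s).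

Definition admissible (W : nat -> A) (s : seq E) : Prop :=
  symmetric s /\ ifactor W (Fp s).
End Graph.

(* Main.v *)
Require Import Defs.
From mathcomp Require Import ssreflect ssrfun ssrbool eqtype ssrnat seq path choice fintype fingraph bigop.
From mathcomp Require Import zify.

Lemma ivt_pre (f : nat -> nat) (D : nat -> bool) L m :
  f 0 <= L ->
  (forall k, k < m -> D k -> f k.+1 <= f k + L) ->
  (forall k, k < m -> ~~ D k -> f k.+1 = f k) ->
  forall m', m' <= m -> forall n, n <= f m' ->
  exists k, [/\ k <= m', (k < m' -> D k), n <= f k & f k <= n + L].
Proof.
move=> h0 hD hN; elim=> [|m' IH] hm n hn.
  exists 0; split => //; lia.
have hm' : m' < m by lia.
case hd: (D m').
  case: (leqP n (f m')) => h.
    have [k [k1 k2 k3 k4]] := IH (ltnW hm') n h.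
    exists k; split => //; first lia.
    move=> _; case: (ltnP k m') => hk; first exact: k2.
    by have -> : k = m' by lia.
  exists m'.+1; split => //; first by rewrite ltnn.
  have := hD m' hm' hd; lia.
have e := hN m' hm' (negbT hd).
rewrite e in hn.
have [k [k1 k2 k3 k4]] := IH (ltnW hm') n hn.
case: (ltnP k m') => hk.
  exists k; split => //; lia.
exists m'.+1; split => //; first by rewrite ltnn.
  by rewrite e; have <- : k = m' by lia.
by rewrite e; have <- : k = m' by lia.
Qed.

Lemma ivt_suf (f : nat -> nat) (C : nat -> bool) L m :
  C 0 -> f 0 <= L ->
  (forall k, k < m -> C k.+1 -> f k.+1 <= f k + L) ->
  (forall k, k < m -> ~~ C k.+1 -> f k.+1 = f k) ->
  forall m', m' <= m -> forall n, n <= f m' ->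
  exists k, [/\ k <= m', C k, n <= f k & f k <= n + L].
Proof.
move=> c0 h0 hD hN; elim=> [|m' IH] hm n hn.
  exists 0; split => //; lia.
have hm' : m' < m by lia.
case hd: (C m'.+1).
  case: (leqP n (f m')) => h.
    have [k [k1 k2 k3 k4]] := IH (ltnW hm') n h.
    exists k; split => //; lia.
  exists m'.+1; split => //.
  have := hD m' hm' hd; lia.
have e := hN m' hm' (negbT hd).
rewrite e in hn.
have [k [k1 k2 k3 k4]] := IH (ltnW hm') n hn.
exists k; split => //; lia.
Qed.

Lemma Fp_cat (A : eqType) (V E : finType) (src tgt : E -> V) (Fw : E -> seq A) p t :
  p != [::] ->
  Fp src tgt Fw (p ++ t) =
  Fp src tgt Fw p ++ flatten [seq Fw x | x <- t & distributing src tgt (src x)].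
Proof.
case: p => [|e p] // _ /=.
by rewrite filter_cat map_cat flatten_cat catA.
Qed.

Lemma Bp_cat (A : eqType) (V E : finType) (src tgt : E -> V) (Bw : E -> seq A) t s1 :
  s1 != [::] ->
  Bp src tgt Bw (t ++ s1) =
  flatten [seq Bw x | x <- t & collecting src tgt (tgt x)] ++ Bp src tgt Bw s1.
Proof.
case: s1 => [|d ds] // _; case: t => [|e t] //=.
rewrite belast_cat /= last_cat /=.
rewrite -cat_rcons -lastI.
by rewrite filter_cat map_cat flatten_cat catA.
Qed.

Lemma path_adj (V E : finType) (src tgt : E -> V) s x0 k :
  sorted (fun e1 e2 => tgt e1 == src e2) s -> k.+1 < size s ->
  tgt (nth x0 s k) = src (nth x0 s k.+1).
Proof.
case: s => [|e s] //= /(pathP x0) h hk.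
exact/eqP/(h k).
Qed.

Lemma win_iota (A : eqType) (W : nat -> A) j n : window W j n = map W (iota j n).
Proof.
rewrite /window /mkseq; have -> : iota j n = iota (j + 0) n by rewrite addn0.
by rewrite iotaDl -map_comp.
Qed.

Lemma drop_catl (T : Type) n (s1 s2 : seq T) : n <= size s1 -> drop n (s1 ++ s2) = drop n s1 ++ s2.
Proof.
move=> h; rewrite drop_cat; case: ltnP => h' //.
have -> : n = size s1 by apply/eqP; rewrite eqn_leq h h'.
by rewrite subnn drop0 drop_size.
Qed.

Lemma take_catl (T : Type) n (s1 s2 : seq T) : n <= size s1 -> take n (s1 ++ s2) = take n s1.
Proof.
move=> h; rewrite take_cat; case: ltnP => h' //.
have -> : n = size s1 by apply/eqP; rewrite eqn_leq h h'.
by rewrite subnn take0 cats0 take_size.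
Qed.

Lemma last_take (T : Type) (x0 : T) s j : j < size s -> last x0 (take j.+1 s) = nth x0 s j.
Proof. by move=> h; rewrite (take_nth x0 h) last_rcons. Qed.

Theorem lemma3p4 (A : eqType) (W : nat -> A)
  (V E : finType) (src tgt : E -> V) (Fw Bw : E -> seq A) :
  recurrent W ->
  graph_with_words src tgt ->
  rs_prop1 E ->
  rs_prop2 src tgt Fw Bw ->
  rs_prop3 src tgt Fw Bw ->
  rs_prop4 src tgt Fw ->
  rs_prop5 Fw Bw W ->
  rs_prop6 src tgt Fw W ->
  forall u : seq A, ifactor W u ->
    exists s : seq E, admissible src tgt Fw W s /\ infix u (Fp src tgt Fw s).
Proof.
move=> hrec _ _ _ h3 _ _ h6 u hu.
set L := \max_(e : E) (size (Fw e) + size (Bw e)).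
have hLF e : size (Fw e) <= L.
  have := @leq_bigmax _ (fun e => size (Fw e) + size (Bw e)) e; rewrite -/L; lia.
have hLB e : size (Bw e) <= L.
  have := @leq_bigmax _ (fun e => size (Fw e) + size (Bw e)) e; rewrite -/L; lia.
have [i [hi hwi]] := hrec u hu L.
rewrite win_iota in hwi.
set N := L + size u + L.
set v := map W (iota (i - L) N).
have hv : ifactor W v by exists (i - L); rewrite win_iota /v size_map size_iota.
have [s [hs hin]] := h6 v hv.
move/infixP: hin => [x [y hS]].
have hsizeS : size (Fp src tgt Fw s) = size x + N + size y.
  by rewrite hS !size_cat /v size_map size_iota addnA.
case: s hs hS hsizeS => [|e0 t] // hs hS hsizeS.
set s := e0 :: t.
have hsym := hs; move: hs => /= /and3P [hpath hc0 hdl].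
move: hpath => /andP [_ hsort].
pose Bg (l : seq E) := flatten [seq Bw z | z <- l & collecting src tgt (tgt z)].
pose f k := size (Bg (take k s)).
pose C k := collecting src tgt (src (nth e0 s k)).
have hBs : Bp src tgt Bw s = Fp src tgt Fw s by rewrite (h3 _ hsym).
have htk : take (size t) s = belast e0 t.
  by rewrite /s lastI -cats1 take_size_cat // size_belast.
have hfm : size x <= f (size t).
  have := f_equal size hBs; rewrite hsizeS /= size_cat /f htk.
  have := hLB (last e0 t); rewrite /N /Bg; lia.
have [k [hk hCk hk1 hk2]] : exists k, [/\ k <= size t, C k, size x <= f k & f k <= size x + L].
  apply: (@ivt_suf f C L (size t)) => //.
  - move=> k hk _; rewrite /f (take_nth e0 (n:=k)); last by rewrite /s /=; lia.
    rewrite /Bg -cats1 filter_cat map_cat flatten_cat size_cat /=.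
    case: ifP => _ /=; last lia.
    rewrite cats0; have := hLB (nth e0 s k); lia.
  - move=> k hk hC; rewrite /f (take_nth e0 (n:=k)); last by rewrite /s /=; lia.
    rewrite /Bg -cats1 filter_cat map_cat flatten_cat size_cat /=.
    rewrite (@path_adj _ _ src tgt s e0 k hsort); last by rewrite /=; lia.
    by rewrite /C in hC; rewrite (negbTE hC) /= addn0.
have hks : k < size s by rewrite /s /=; lia.
have hsplit : s = take k s ++ (nth e0 s k :: drop k.+1 s) by rewrite -drop_nth // cat_take_drop.
set d := nth e0 s k in hsplit hCk.
set ds := drop k.+1 s in hsplit.
set s1 := d :: ds.
have hlast : last d ds = last e0 t.
  have : last e0 s = last e0 (take k s ++ d :: ds) by rewrite -hsplit.
  by rewrite last_cat /=.
have hsort1 : sorted (fun e1 e2 : E => tgt e1 == src e2) s1.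
  have := drop_sorted k hsort; by rewrite (drop_nth e0 hks).
have hsym1 : Defs.symmetric src tgt s1.
  rewrite /C -/d in hCk; by rewrite /s1 /= hCk hlast hdl /is_path hsort1.
have hFs1 : Fp src tgt Fw s1 = drop (f k) (Fp src tgt Fw s).
  rewrite -hBs [in RHS]hsplit Bp_cat // -(h3 _ hsym1) drop_size_cat //.
pose g j := size (Fp src tgt Fw (take j.+1 s1)).
pose D j := distributing src tgt (tgt (nth e0 s1 j)).
have hgm : size x + L + size u - f k <= g (size ds).
  rewrite /g take_oversize; last by rewrite /s1 /=.
  rewrite hFs1 size_drop hsizeS /N; lia.
have [j [hj hDj hj1 hj2]] : exists j, [/\ j <= size ds, (j < size ds -> D j),
    size x + L + size u - f k <= g j & g j <= size x + L + size u - f k + L].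
  apply: (@ivt_pre g D L (size ds)) => //.
  - rewrite /g /= take0 /= cats0; exact: hLF.
  - move=> j hj _; rewrite /g (take_nth e0 (n:=j.+1)); last by rewrite /s1 /=.
    rewrite -cats1 Fp_cat; last by rewrite /s1.
    rewrite size_cat /=; case: ifP => _ /=; last lia.
    rewrite cats0; have := hLF (nth e0 ds j); lia.
  - move=> j hj hD; rewrite /g (take_nth e0 (n:=j.+1)); last by rewrite /s1 /=.
    rewrite -cats1 Fp_cat; last by rewrite /s1.
    rewrite size_cat /= -(@path_adj _ _ src tgt s1 e0 j hsort1); last by rewrite /s1 /=.
    by rewrite /D in hD; rewrite (negbTE hD) /= addn0.
have hDj' : D j.
  case: (ltnP j (size ds)) => h; first exact: hDj h.
  have -> : j = size ds by apply/eqP; rewrite eqn_leq hj h.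
  rewrite /D; have -> : nth e0 s1 (size ds) = last d ds.
    by rewrite -[size ds]/((size s1).-1) nth_last.
  by rewrite hlast.
set p := take j.+1 s1.
have hjs1 : j < size s1 by rewrite /s1 /=.
have hsymp : Defs.symmetric src tgt p.
  have hp : p = d :: take j ds by [].
  have hlp : last d (take j ds) = nth e0 s1 j.
    by rewrite -(@last_take _ e0 s1 j hjs1).
  rewrite /C -/d in hCk; rewrite hp /= hCk hlp.
  have := take_sorted j.+1 hsort1; rewrite -/p hp => hh.
  by rewrite /is_path hh andbT; exact: hDj'.
have hFp : Fp src tgt Fw p = take (g j) (Fp src tgt Fw s1).
  rewrite -[in RHS](cat_take_drop j.+1 s1) -/p Fp_cat; last by rewrite /p /s1.
  by rewrite take_size_cat.
set c := f k in hk1 hk2 hFs1 hgm hj1 hj2.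
set G := g j in hj1 hj2 hFp.
set X := size x in hk1 hk2 hgm hj1 hj2 hsizeS.
have hP : i - L + (c - X) <= i by lia.
have hPG : i + size u <= i - L + (c - X) + G by lia.
have hFpv : Fp src tgt Fw p = map W (iota (i - L + (c - X)) G).
  rewrite hFp hFs1 /s hS -(subnK hk1) -drop_drop drop_size_cat //.
  rewrite drop_catl; last by rewrite /v size_map size_iota /N; lia.
  rewrite take_catl; last by rewrite /v size_drop size_map size_iota /N; lia.
  rewrite /v -map_drop -map_take drop_iota take_iota.
  have -> : minn G (N - (c - X)) = G by rewrite /N; lia.
  by rewrite addnK.
exists p; split; first split.
- exact: hsymp.
- by exists (i - L + (c - X)); rewrite win_iota hFpv size_map size_iota.
- rewrite hFpv -hwi.
  have -> : G = (i - (i - L + (c - X))) + (size u + (G - (i - (i - L + (c - X))) - size u)) by lia.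
  rewrite iotaD iotaD (subnKC hP) !map_cat.
  by apply/infixP; eexists; eexists.
Qed.
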